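(* Let $\Bbbk$ be an algebraically closed field of characteristic zero and $H$ the $\Bbbk$-algebra generated by $b,c,z$ with relations $b^2=c^2=1$, $bc=cb$, $zb=-bz$, $zc=-cz$, $z^2=0$. Let $e_0=\frac14(1+b)(1+c)$, $e_1=\frac14(1+b)(1-c)$, $e_2=\frac14(1-b)(1+c)$, $e_3=\frac14(1-b)(1-c)$, and let $\tau$ be the permutation of $\{0,1,2,3\}$ with $\tau(0)=3,\tau(1)=2,\tau(2)=1,\tau(3)=0$. Then for $i\in\{0,1,2,3\}$ and $k\in\{0,1,2,3\}\setminus\{i,\tau(i)\}$, the ideals $(e_i+e_{\tau(i)})$, $(z+e_i+e_{\tau(i)})$, $(ze_k+e_i+e_{\tau(i)})$ and $(ze_{\tau(k)}+e_i+e_{\tau(i)})$ are pairwise distinct.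
   Context: $(a)$ denotes the two-sided ideal of $H$ generated by $a$. *)

(* Defs.v *)
From HB Require Import structures.
From mathcomp Require Import all_boot all_order all_algebra.
Set Implicit Arguments. Unset Strict Implicit. Unset Printing Implicit Defensive.
Import Order.TTheory GRing.Theory Num.Theory.
Local Open Scope ring_scope.

Definition H_rels (k : fieldType) (A : algType k) (b c z : A) : Prop :=
  [/\ b * b = 1, c * c = 1, b * c = c * b &
      [/\ z * b = - (b * z), z * c = - (c * z) & z * z = 0]].

Definition alg_generated_by (k : fieldType) (A : algType k) (b c z : A) : Prop :=
  forall S : A -> Prop,
    S 1 -> S b -> S c -> S z ->
    (forall x y, S x -> S y -> S (x + y)) ->
    (forall (a : k) x, S x -> S (a *: x)) ->
    (forall x y, S x -> S y -> S (x * y)) ->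
    forall x, S x.

Definition H_universal (k : fieldType) (A : algType k) (b c z : A) : Prop :=
  forall (B : algType k) (b' c' z' : B), H_rels b' c' z' ->
    exists f : A -> B,
      [/\ (forall x y, f (x + y) = f x + f y),
          (forall (a : k) x, f (a *: x) = a *: f x),
          (forall x y, f (x * y) = f x * f y),
          f 1 = 1 & [/\ f b = b', f c = c' & f z = z']].

(* A (together with b, c, z) is a presentation of the algebra
   k<b,c,z | b^2=c^2=1, bc=cb, zb=-bz, zc=-cz, z^2=0>. *)
Definition is_H (k : fieldType) (A : algType k) (b c z : A) : Prop :=
  [/\ H_rels b c z, alg_generated_by b c z & H_universal b c z].

Definition e_idem (k : fieldType) (A : algType k) (b c : A) (i : 'I_4) : A :=
  let sb : A := if (val i < 2)%N then 1 else -1 in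
  let sc : A := if ~~ odd (val i) then 1 else -1 in
  (4%:R : k)^-1 *: ((1 + sb * b) * (1 + sc * c)).

Definition tau (i : 'I_4) : 'I_4 := rev_ord i.

Definition ideal_gen (k : fieldType) (A : algType k) (a : A) : A -> Prop :=
  fun h => exists (n : nat) (xs ys : 'I_n -> A), h = \sum_(j < n) xs j * a * ys j.

(* Main.v *)
Require Import Defs.
From HB Require Import structures.
From mathcomp Require Import all_boot all_order all_algebra all_field.
From mathcomp Require Import ring.
Import GRing.Theory.
Local Open Scope ring_scope.
Set Implicit Arguments. Unset Strict Implicit. Unset Printing Implicit Defensive.
Import Order.TTheory GRing.Theory Num.Theory.

Definition mk (k : fieldType) (a b c d : k) : 'M[k]_2 :=
  \matrix_(p < 2, q < 2) if p == 0 then (if q == 0 then a else b)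
                         else (if q == 0 then c else d).

Lemma mk_inj (k : fieldType) (a b c d a' b' c' d' : k) :
  mk a b c d = mk a' b' c' d' -> [/\ a = a', b = b', c = c' & d = d'].
Proof.
move=> E.
have h : forall p q : 'I_2, mk a b c d p q = mk a' b' c' d' p q by rewrite E.
have := h 0 0; have := h 0 1; have := h 1 0; have := h 1 1.
by rewrite !mxE /=; do 4 move=> ->.
Qed.

Lemma mk_ext (k : fieldType) (A B : 'M[k]_2) :
  (forall p q : 'I_2, A p q = B p q) -> A = B.
Proof. by move=> h; apply/matrixP => p q; apply: h. Qed.

Ltac mkcase := apply: mk_ext => -[[|[|?]] ?] -[[|[|?]] ?] //; rewrite !mxE /=.

Lemma mkM (k : fieldType) (a b c d a' b' c' d' : k) :
  mk a b c d * mk a' b' c' d' =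
  mk (a*a'+b*c') (a*b'+b*d') (c*a'+d*c') (c*b'+d*d').
Proof.
apply: mk_ext => -[[|[|p]] hp] -[[|[|q]] hq] //.
all: by rewrite !mxE !big_ord_recl big_ord0 !mxE /= addr0.
Qed.

Lemma mkD (k : fieldType) (a b c d a' b' c' d' : k) :
  mk a b c d + mk a' b' c' d' = mk (a+a') (b+b') (c+c') (d+d').
Proof. by mkcase. Qed.

Lemma mkZ (k : fieldType) (x a b c d : k) :
  x *: mk a b c d = mk (x*a) (x*b) (x*c) (x*d).
Proof. by mkcase. Qed.

Lemma mk1 (k : fieldType) : 1 = mk 1 0 0 (1 : k).
Proof. by mkcase. Qed.

Lemma mk0 (k : fieldType) : 0 = mk 0 0 0 (0 : k).
Proof. by mkcase. Qed.

Lemma mkN (k : fieldType) (a b c d : k) : - mk a b c d = mk (-a) (-b) (-c) (-d).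
Proof. by mkcase. Qed.

Lemma mkN1 (k : fieldType) : -1 = mk (-1) 0 0 (-1 : k).
Proof. by mkcase; rewrite ?oppr0. Qed.

Lemma key (k : fieldType) (A B : algType k) (f : A -> B) :
  (forall x y, f (x + y) = f x + f y) -> (forall x y, f (x * y) = f x * f y) ->
  forall a a', f a = 0 -> f a' != 0 -> ideal_gen a <> ideal_gen a'.
Proof.
move=> fD fM a a' fa fa' E.
have f0 : f 0 = 0.
  have h := fD 0 0; rewrite addr0 in h.
  by apply: (addrI (f 0)); rewrite -h addr0.
have : ideal_gen a' a'.
  by exists 1%N, (fun=> 1), (fun=> 1); rewrite big_ord1 mul1r mulr1.
rewrite -E => -[n [xs [ys eq]]].
move: fa'; rewrite eq (big_morph f fD f0) big1 ?eqxx // => j _.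
by rewrite !fM fa mulr0 mul0r.
Qed.

Lemma phi_e (k : fieldType) (A B : algType k) (f : A -> B) (b c : A) j :
  (forall x y, f (x + y) = f x + f y) -> (forall (a : k) x, f (a *: x) = a *: f x) ->
  (forall x y, f (x * y) = f x * f y) -> f 1 = 1 ->
  f (e_idem b c j) = e_idem (f b) (f c) j.
Proof.
move=> fD fZ fM f1.
have fN1 : f (-1) = -1 by rewrite -scaleN1r fZ f1 scaleN1r.
rewrite /e_idem fZ fM !fD fM [f (_ * c)]fM f1.
by case: ifP; case: ifP; rewrite ?fN1 ?f1.
Qed.

Definition sgb (k : fieldType) (j : 'I_4) : k := if (val j < 2)%N then 1 else -1.
Definition sgc (k : fieldType) (j : 'I_4) : k := if ~~ odd (val j) then 1 else -1.

Lemma e_mx (k : fieldType) (s t : k) j :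
  e_idem (mk s 0 0 (-s)) (mk t 0 0 (-t)) j =
  mk ((4%:R : k)^-1 * ((1 + sgb k j * s) * (1 + sgc k j * t))) 0 0
     ((4%:R : k)^-1 * ((1 - sgb k j * s) * (1 - sgc k j * t))).
Proof.
rewrite /e_idem /sgb /sgc.
case: ifP => _; case: ifP => _; rewrite ?(mkN1 k) !(mk1 k) !mkM !mkD !mkM mkZ.
all: congr mk; ring.
Qed.

Lemma sgb_tau (k : fieldType) j : sgb k (tau j) = - sgb k j.
Proof. by case: j => -[|[|[|[|?]]]] ? //=; rewrite /sgb /= ?opprK. Qed.
Lemma sgc_tau (k : fieldType) j : sgc k (tau j) = - sgc k j.
Proof. by case: j => -[|[|[|[|?]]]] ? //=; rewrite /sgc /= ?opprK. Qed.
Lemma sgb2 (k : fieldType) j : sgb k j * sgb k j = 1.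
Proof. by rewrite /sgb; case: ifP; rewrite ?mulr1 ?mulrNN ?mulr1. Qed.
Lemma sgc2 (k : fieldType) j : sgc k j * sgc k j = 1.
Proof. by rewrite /sgc; case: ifP; rewrite ?mulr1 ?mulrNN ?mulr1. Qed.

Lemma sg_off (k : fieldType) j l : l != j -> l != tau j ->
  (1 + sgb k j * sgb k l) * (1 + sgc k j * sgc k l) = 0 /\
  (1 - sgb k j * sgb k l) * (1 - sgc k j * sgc k l) = 0.
Proof.
case: j => -[|[|[|[|?]]]] ? //; case: l => -[|[|[|[|?]]]] ? //=.
all: rewrite /sgb /sgc /= => _ _.
all: rewrite ?mulr1 ?mul1r ?mulrNN ?mulr1 ?opprK ?subrr ?addrN ?mulr0 ?mul0r; split => //.
Qed.

Lemma rels_mx (k : fieldType) (s t : k) : s * s = 1 -> t * t = 1 ->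
  H_rels (mk s 0 0 (-s)) (mk t 0 0 (-t)) (mk 0 1 0 0).
Proof.
move=> hs ht; rewrite /H_rels !mkM (mk1 k) (mk0 k) !mkN.
rewrite !(mul0r, mulr0, addr0, add0r, mulrNN, hs, ht, mulrN, mulNr, mulr1, mul1r, oppr0).
split; rewrite // 1?mulrC //; by split.

Qed.

Lemma key' (k : fieldType) (A B : algType k) (f : A -> B) :
  (forall x y, f (x + y) = f x + f y) -> (forall x y, f (x * y) = f x * f y) ->
  forall a a', f a = 0 -> f a' != 0 -> ideal_gen a' <> ideal_gen a.
Proof. by move=> fD fM a a' h1 h2 E; apply: (key fD fM h1 h2); rewrite E. Qed.

Lemma mk_nz (k : fieldType) (a b c d : k) : b != 0 -> mk a b c d != 0.
Proof. by move=> hb; rewrite (mk0 k); apply/eqP => /mk_inj [_ h _ _]; move: hb; rewrite h eqxx. Qed.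

Theorem lemma5p7 (k : closedFieldType) (Hchar : [pchar k] =i pred0)
  (H : algType k) (b c z : H) (HH : is_H b c z)
  (i kk : 'I_4) (hki : kk != i) (hkt : kk != tau i) :
  let e := e_idem b c in
  let I1 := ideal_gen (e i + e (tau i)) in
  let I2 := ideal_gen (z + e i + e (tau i)) in
  let I3 := ideal_gen (z * e kk + e i + e (tau i)) in
  let I4 := ideal_gen (z * e (tau kk) + e i + e (tau i)) in
  [/\ I1 <> I2, I1 <> I3, I1 <> I4 & [/\ I2 <> I3, I2 <> I4 & I3 <> I4]].
Proof.
move=> e I1 I2 I3 I4; rewrite /I1 /I2 /I3 /I4 /e {I1 I2 I3 I4 e}.
case: HH => rels _ univ.
have h4 : (4%:R : k) != 0 by move/pcharf0P: Hchar => ->.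
have h44 : (4%:R : k)^-1 * ((1 + 1) * (1 + 1)) = 1.
  by rewrite -[(1 + 1) * (1 + 1)](natrM k 2 2) mulVf.
have hs := sgb2 k kk; have ht := sgc2 k kk.
have hs' : (- sgb k kk) * (- sgb k kk) = 1 by rewrite mulrNN.
have ht' : (- sgc k kk) * (- sgc k kk) = 1 by rewrite mulrNN.
have [fA [fAD fAZ fAM fA1 [fAb fAc fAz]]] := univ _ _ _ _ (rels_mx hs ht).
have [fB [fBD fBZ fBM fB1 [fBb fBc fBz]]] := univ _ _ _ _ (rels_mx hs' ht').
have eA j : fA (e_idem b c j) = e_idem (fA b) (fA c) j := @phi_e _ _ _ fA b c j fAD fAZ fAM fA1.
have eB j : fB (e_idem b c j) = e_idem (fB b) (fB c) j := @phi_e _ _ _ fB b c j fBD fBZ fBM fB1.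
have [P1 P2] := sg_off k hki hkt.
have nz : (4%:R : k)^-1 * ((1 + 1) * (1 + 1)) != 0 by rewrite h44 oner_eq0.
have nz1 : (1 : k) != 0 by rewrite oner_eq0.
split; last split.
- apply: (key fAD fAM); rewrite ?fAD ?fBD ?fAM ?fBM ?eA ?eB ?fAb ?fAc ?fBb ?fBc ?e_mx ?fAz ?fBz ?sgb_tau ?sgc_tau;   rewrite ?mulNr ?mulrN ?opprK ?sgb2 ?sgc2 ?P1 ?P2 ?subrr ?mulr0 ?mul0r;   rewrite ?mkM ?mkD ?mulr0 ?mul0r ?mulr1 ?mul1r ?addr0 ?add0r -?mk0 ?mk_nz //.
- apply: (key fBD fBM); rewrite ?fAD ?fBD ?fAM ?fBM ?eA ?eB ?fAb ?fAc ?fBb ?fBc ?e_mx ?fAz ?fBz ?sgb_tau ?sgc_tau;   rewrite ?mulNr ?mulrN ?opprK ?sgb2 ?sgc2 ?P1 ?P2 ?subrr ?mulr0 ?mul0r;   rewrite ?mkM ?mkD ?mulr0 ?mul0r ?mulr1 ?mul1r ?addr0 ?add0r -?mk0 ?mk_nz //.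
- apply: (key fAD fAM); rewrite ?fAD ?fBD ?fAM ?fBM ?eA ?eB ?fAb ?fAc ?fBb ?fBc ?e_mx ?fAz ?fBz ?sgb_tau ?sgc_tau;   rewrite ?mulNr ?mulrN ?opprK ?sgb2 ?sgc2 ?P1 ?P2 ?subrr ?mulr0 ?mul0r;   rewrite ?mkM ?mkD ?mulr0 ?mul0r ?mulr1 ?mul1r ?addr0 ?add0r -?mk0 ?mk_nz //.
- apply: (key' fAD fAM); rewrite ?fAD ?fBD ?fAM ?fBM ?eA ?eB ?fAb ?fAc ?fBb ?fBc ?e_mx ?fAz ?fBz ?sgb_tau ?sgc_tau;   rewrite ?mulNr ?mulrN ?opprK ?sgb2 ?sgc2 ?P1 ?P2 ?subrr ?mulr0 ?mul0r;   rewrite ?mkM ?mkD ?mulr0 ?mul0r ?mulr1 ?mul1r ?addr0 ?add0r -?mk0 ?mk_nz //.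
- apply: (key' fBD fBM); rewrite ?fAD ?fBD ?fAM ?fBM ?eA ?eB ?fAb ?fAc ?fBb ?fBc ?e_mx ?fAz ?fBz ?sgb_tau ?sgc_tau;   rewrite ?mulNr ?mulrN ?opprK ?sgb2 ?sgc2 ?P1 ?P2 ?subrr ?mulr0 ?mul0r;   rewrite ?mkM ?mkD ?mulr0 ?mul0r ?mulr1 ?mul1r ?addr0 ?add0r -?mk0 ?mk_nz //.
- apply: (key fAD fAM); rewrite ?fAD ?fBD ?fAM ?fBM ?eA ?eB ?fAb ?fAc ?fBb ?fBc ?e_mx ?fAz ?fBz ?sgb_tau ?sgc_tau;   rewrite ?mulNr ?mulrN ?opprK ?sgb2 ?sgc2 ?P1 ?P2 ?subrr ?mulr0 ?mul0r;   rewrite ?mkM ?mkD ?mulr0 ?mul0r ?mulr1 ?mul1r ?addr0 ?add0r -?mk0 ?mk_nz //.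
Qed.
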